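(* Let $(m_j)_{j=1}^{\infty}$ be a strictly increasing sequence of positive integers with $m_{j+1}\ge q\,m_j$ for all $j$, where $q\ge 2$. Let $A_j>0$, $B_j\in\mathbb{C}$ with $A_j^2-|B_j|^2=1$, and let $M,N\in\mathbb{N}_0$ with $M<N$. Expand each entry of the matrix product $$\prod_{j=M+1}^{N}\begin{bmatrix} A_j & B_j e^{2\pi i m_j t}\\ \overline{B_j}e^{-2\pi i m_j t} & A_j\end{bmatrix}$$ (factors in increasing order of $j$ from left to right) formally as a sum of products, one factor taken from each matrix, so that each term is a constant times $e^{2\pi i n t}$ for some integer frequency $n$. Then, within each entry, the frequencies of distinct terms of this expansion are mutually separated by at least $m_{M+1}$; i.e. any two distinct terms have frequencies $n\ne n'$ with $|n-n'|\ge m_{M+1}$.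
   Context: The frequency of a term is the integer $n$ for which the term is a constant multiple of $e^{2\pi i n t}$; e.g. $B_{M+1}e^{2\pi i m_{M+1}t}\cdot A_{M+2}$ has frequency $m_{M+1}$. *)

(* Defs.v *)
From Stdlib Require Import Reals ZArith List.
From Coquelicot Require Import Coquelicot.
Open Scope R_scope.

(* Row/column indices of a 2x2 matrix are encoded by bool:
   false = first row/column, true = second row/column.
   An "entry choice" e = (r, c) picks entry (r, c) of a factor. *)

(* Matrix j of the product:
   [ A_j                      B_j e^{2 pi i m_j t} ]
   [ conj(B_j) e^{-2pi i m_j t}          A_j       ]
   Each entry is (coefficient) * e^{2 pi i (frequency) t}. *)
Definition entry_coef (A : nat -> R) (B : nat -> C) (j : nat) (e : bool * bool) : C :=
  match e with
  | (false, false) => RtoC (A j)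
  | (false, true) => B j
  | (true, false) => Cconj (B j)
  | (true, true) => RtoC (A j)
  end.

Definition entry_freq (m : nat -> nat) (j : nat) (e : bool * bool) : Z :=
  match e with
  | (false, true) => Z.of_nat (m j)
  | (true, false) => (- Z.of_nat (m j))%Z
  | _ => 0%Z
  end.

Definition cexp_freq (n : Z) (t : R) : C :=
  (cos (2 * PI * IZR n * t), sin (2 * PI * IZR n * t)).

Definition entry_val (A : nat -> R) (B : nat -> C) (m : nat -> nat) (j : nat)
  (e : bool * bool) (t : R) : C :=
  Cmult (entry_coef A B j e) (cexp_freq (entry_freq m j e) t).

(* A term of the formal expansion of entry (a, b) of the product of the
   factors j, j+1, ..., j + length l - 1 (left to right) is a list l of entry
   choices, one per factor, chained: the first row is a, the column of each
   choice is the row of the next, the last column is b. *)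
Fixpoint is_term (a b : bool) (l : list (bool * bool)) : Prop :=
  match l with
  | nil => a = b
  | (r, c) :: l' => r = a /\ is_term c b l'
  end.

Fixpoint term_freq (m : nat -> nat) (j : nat) (l : list (bool * bool)) : Z :=
  match l with
  | nil => 0%Z
  | e :: l' => (entry_freq m j e + term_freq m (S j) l')%Z
  end.

Fixpoint term_coef (A : nat -> R) (B : nat -> C) (j : nat) (l : list (bool * bool)) : C :=
  match l with
  | nil => RtoC 1
  | e :: l' => Cmult (entry_coef A B j e) (term_coef A B (S j) l')
  end.

Fixpoint term_val (A : nat -> R) (B : nat -> C) (m : nat -> nat) (j : nat)
  (l : list (bool * bool)) (t : R) : C :=
  match l with
  | nil => RtoC 1
  | e :: l' => Cmult (entry_val A B m j e t) (term_val A B m (S j) l' t)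
  end.

(* Main.v *)
Require Import Defs.
From Stdlib Require Import Reals ZArith List Lia Lra.
From Coquelicot Require Import Coquelicot.
Open Scope R_scope.

Definition bz (x : bool) : Z := if x then 1%Z else 0%Z.

Lemma key (m : nat -> nat) (H2 : forall j, (1 <= j)%nat -> (2 * m j <= m (S j))%nat) :
  forall l1 l2 j a a' b, (1 <= j)%nat -> length l1 = length l2 ->
  is_term a b l1 -> is_term a' b l2 ->
  (map snd l1 = map snd l2 /\
   (term_freq m j l1 - term_freq m j l2 + (bz a - bz a') * Z.of_nat (m j) = 0)%Z)
  \/ (Z.of_nat (m j) <= Z.abs (term_freq m j l1 - term_freq m j l2
                               + (bz a - bz a') * Z.of_nat (m j)))%Z.
Proof.
  induction l1 as [|[r c] t1 IH]; intros l2 j a a' b Hj Hl T1 T2.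
  - destruct l2; simpl in Hl; try discriminate. simpl in *. subst. left.
    split; [reflexivity|]. lia.
  - destruct l2 as [|[r' c'] t2]; simpl in Hl; try discriminate.
    simpl in T1, T2. destruct T1 as [-> T1]. destruct T2 as [-> T2].
    assert (Hs := H2 j Hj).
    destruct (IH t2 (S j) c c' b ltac:(lia) ltac:(lia) T1 T2) as [[Hm HE]|HE];
    simpl; rewrite ?Hm;
    assert (Hx : (0 <= Z.of_nat (m j))%Z) by lia;
    destruct a, a', c, c'; unfold bz in *; simpl entry_freq;
    first [ left; split; [reflexivity | lia] | right; lia ].
Qed.

Lemma snd_eq : forall l1 l2 a b, is_term a b l1 -> is_term a b l2 ->
  map snd l1 = map snd l2 -> l1 = l2.
Proof.
  induction l1 as [|[r c] t1 IH]; intros [|[r' c'] t2] a b T1 T2 Hm;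
    simpl in *; try discriminate; auto.
  destruct T1 as [-> T1], T2 as [-> T2]. injection Hm as -> Hm.
  f_equal. eapply IH; eauto.
Qed.

Theorem lemma2p1 (m : nat -> nat) (q : R) (A : nat -> R) (B : nat -> C)
  (M N : nat) (a b : bool) (l1 l2 : list (bool * bool)) :
  2 <= q ->
  (forall j, (1 <= j)%nat -> (0 < m j)%nat) ->
  (forall j, (1 <= j)%nat -> (m j < m (S j))%nat) ->
  (forall j, (1 <= j)%nat -> q * INR (m j) <= INR (m (S j))) ->
  (forall j, (1 <= j)%nat -> 0 < A j) ->
  (forall j, (1 <= j)%nat -> A j ^ 2 - Cmod (B j) ^ 2 = 1) ->
  (M < N)%nat ->
  length l1 = (N - M)%nat -> length l2 = (N - M)%nat ->
  is_term a b l1 -> is_term a b l2 -> l1 <> l2 ->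
  term_freq m (S M) l1 <> term_freq m (S M) l2 /\
  (Z.of_nat (m (S M)) <= Z.abs (term_freq m (S M) l1 - term_freq m (S M) l2))%Z.
Proof.
  intros Hq Hpos _ Hgr _ _ _ L1 L2 T1 T2 Hne.
  assert (H2 : forall j, (1 <= j)%nat -> (2 * m j <= m (S j))%nat).
  { intros j Hj. apply INR_le. rewrite mult_INR. simpl (INR 2).
    assert (0 <= INR (m j)) by apply pos_INR.
    specialize (Hgr j Hj). nra. }
  destruct (key m H2 l1 l2 (S M) a a b ltac:(lia) ltac:(lia) T1 T2) as [[Hm _]|HE].
  - exfalso. apply Hne. eapply snd_eq; eauto.
  - rewrite Z.sub_diag, Z.mul_0_l, Z.add_0_r in HE.
    specialize (Hpos (S M) ltac:(lia)). split; [|exact HE]. lia.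
Qed.
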